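(* Let $K\ge 1$ and $q\ge 2$ be integers, and let $i\neq j$ be two elements of the alphabet $\{0,1,\dots,q-1\}$. For $p\in\{1,\dots,K\}$ let $$\mathcal{S}^{(p)}_{i,j}=\bigl\{(\bm m+p\,\bm e_i,\ \bm m+p\,\bm e_j)\ :\ \bm m\in\mathbb{N}_0^{q},\ \textstyle\sum_{\ell=0}^{q-1}m_\ell=K-p\bigr\},$$ and let $\mathcal{S}_{i,j}=\bigcup_{p=1}^{K}\mathcal{S}^{(p)}_{i,j}$. Then $$|\mathcal{S}_{i,j}|=\binom{K+q-1}{q}.$$
   Context: $K$ nodes each hold a quantized value in the alphabet $\{0,1,\dots,q-1\}$. For a symmetric function of the nodes' values only the histogram of the input vector matters: the histogram is $\bm h=(h_0,\dots,h_{q-1})\in\mathbb{N}_0^q$ with $h_\ell$ the number of nodes holding value $\ell$, so $\sum_\ell h_\ell=K$. Here $\mathbb{N}_0=\{0,1,2,\dots\}$ and $\bm e_\ell$ denotes the $\ell$-th standard basis vector of $\mathbb{N}_0^q$ (indices $0,\dots,q-1$). The set $\mathcal{S}^{(p)}_{i,j}$ consists of the pairs of histograms of two input configurations that differ in exactly $p$ nodes, each of which holds value $i$ in the first configuration and value $j$ in the second, while the remaining $K-p$ nodes hold identical values in both configurations (the common part being described by the histogram $\bm m$). *)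

(* Defs.v *)
From mathcomp Require Import all_boot.
Set Implicit Arguments. Unset Strict Implicit. Unset Printing Implicit Defensive.

(* A histogram over the alphabet {0,..,q-1} of K nodes: every entry is at most
   K, so histograms relevant here are represented as finite functions
   'I_q -> 'I_K.+1 (values read as nats). *)
Definition hist (q K : nat) := {ffun 'I_q -> 'I_K.+1}.

Definition inSp (q K : nat) (i j : 'I_q) (p : nat) (xy : hist q K * hist q K) : bool :=
  [exists m : hist q K,
     [&& (\sum_(l < q) (m l : nat)) == K - p,
         [forall l : 'I_q, (xy.1 l : nat) == m l + p * (l == i)] &
         [forall l : 'I_q, (xy.2 l : nat) == m l + p * (l == j)]]].

Definition Sp (q K : nat) (i j : 'I_q) (p : nat) : {set hist q K * hist q K} :=
  [set xy | @inSp q K i j p xy].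

Definition S (q K : nat) (i j : 'I_q) : {set hist q K * hist q K} :=
  \bigcup_(1 <= p < K.+1) @Sp q K i j p.

Arguments S {q} K i j.

(* Main.v *)
Require Import Defs.
From mathcomp Require Import all_boot.
From mathcomp Require Import zify.

Lemma memS (q K : nat) (i j : 'I_q) xy :
  (xy \in S K i j) = [exists p : 'I_K, xy \in @Sp q K i j p.+1].
Proof.
rewrite /S big_add1 /= big_mkord.
apply/bigcupP/existsP => [[p _ H]|[p H]]; by exists p.
Qed.

Theorem lemma1 (K q : nat) (i j : 'I_q) :
  1 <= K -> 2 <= q -> i != j ->
  #|S K i j| = 'C(K + q - 1, q).
Proof.
case: K => [//|n] _ _ nij.
have -> : n.+1 + q - 1 = q + n by lia.
rewrite -card_partial_ord_partitions.
pose pw (t : q.-tuple 'I_n.+1) := \sum_(l < q) (tnth t l : nat).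
pose P t := n.+1 - pw t.
pose mk (t : q.-tuple 'I_n.+1) (k : 'I_q) : hist q n.+1 := [ffun l => inord (tnth t l + P t * (l == k))].
pose f (t : q.-tuple 'I_n.+1) := (mk t i, mk t j).
have le_pw : forall (t : q.-tuple 'I_n.+1) l, (tnth t l : nat) <= pw t.
  by move=> t l; rewrite /pw (bigD1 l) //= leq_addr.
have mkE : forall (t : q.-tuple 'I_n.+1) k l, pw t <= n -> (mk t k l : nat) = tnth t l + P t * (l == k).
  move=> t k l hp; rewrite ffunE inordK //.
  have := le_pw t l; rewrite /P; case: (l == k) => /=; lia.
have -> : S n.+1 i j = f @: [set t : q.-tuple 'I_n.+1 | \sum_(x <- t) (x : nat) <= n].
  apply/setP => xy; rewrite memS; apply/existsP/imsetP.
  - case=> p; rewrite inE => /existsP [m /and3P [/eqP sm /forallP h1 /forallP h2]].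
    have lem : forall l, (m l : nat) < n.+1.
      move=> l; have : (m l : nat) <= \sum_(k < q) (m k : nat) by rewrite (bigD1 l) //= leq_addr.
      rewrite sm.
      have := ltn_ord p; lia.
    pose t := [tuple (Ordinal (lem l) : 'I_n.+1) | l < q].
    have pwt : pw t = n.+1 - p.+1 by rewrite /pw -sm; apply: eq_bigr => l _; rewrite tnth_mktuple.
    have Pt : P t = p.+1 by rewrite /P pwt; have := ltn_ord p; lia.
    exists t.
      by rewrite inE big_tuple -/(pw t) pwt; lia.
    case: xy h1 h2 => x y /= h1 h2; congr pair; apply/ffunP => l; apply: val_inj => /=.
      by rewrite (eqP (h1 l)) mkE ?pwt ?Pt ?tnth_mktuple //=; lia.
    by rewrite (eqP (h2 l)) mkE ?pwt ?Pt ?tnth_mktuple //=; lia.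
  - case=> t; rewrite inE big_tuple -/(pw t) => hp ->.
    have p0 : (n - pw t) < n.+1 by lia.
    exists (Ordinal p0); rewrite inE; apply/existsP.
    exists [ffun l => inord (tnth t l)]; apply/and3P; split.
    + apply/eqP; rewrite /= -/(pw t).
      rewrite (eq_bigr (fun l => (tnth t l : nat))); last first.
        by move=> l _; rewrite ffunE inordK // (leq_trans (ltn_ord _)).
      rewrite -/(pw t); lia.
    + apply/forallP => l /=; rewrite mkE // ffunE inordK ?(leq_trans (ltn_ord _)) //.
      by apply/eqP; rewrite /P /=; congr (_ + _ * _); lia.
    + apply/forallP => l /=; rewrite mkE // ffunE inordK ?(leq_trans (ltn_ord _)) //.
      by apply/eqP; rewrite /P /=; congr (_ + _ * _); lia.
apply: card_in_imset => t t'; rewrite !inE !big_tuple -/(pw t) -/(pw t') => ht ht' [e1 e2].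
have h1 : forall l, tnth t l + P t * (l == i) = tnth t' l + P t' * (l == i).
  by move=> l; rewrite -!mkE // e1.
have h2 : forall l, tnth t l + P t * (l == j) = tnth t' l + P t' * (l == j).
  by move=> l; rewrite -!mkE // e2.
have ePP : P t = P t'.
  have ji : (j == i) = false by rewrite eq_sym (negbTE nij).
  have := h1 j; have := h2 j; rewrite ji eqxx /= !muln0 !muln1 !addn0; lia.
apply: eq_from_tnth => l; apply: val_inj => /=; by have := h1 l; rewrite ePP => /eqP; rewrite eqn_add2r => /eqP.
Qed.
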